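(* Let $n>m\ge 1$ and $T\ge 1$ be integers, let $0<\gamma<1$, and let $x_0,x_1,x_2,\ldots\in[-1,1]^m$. Let $\sigma:\mathbb{R}\to[-1,1]$ be a nondecreasing differentiable function, applied componentwise to vectors, with $\sup_z \sigma'(z)\le 1$. Let $H\in\mathbb{R}^{m\times n}$ be the projection onto the first $m$ coordinates. Let $(F_i,G_i)_{i\ge 0}$ be a sequence with $F_i\in\mathbb{R}^{n\times n}$, $G_i\in\mathbb{R}^{n\times(m+1)}$, and suppose that $\|F_i\|_\infty\le 1/\sqrt{\gamma}$ for all $i$. For each $i$, let $(u_0,\dots,u_T)$ be given by $u_0=0$, $u_{t+1}=\sigma(F_iu_t+G_i[x_t;1])$ for $0\le t<T$. Define $s^{(0)}_t(u)=u$, $s^{(1)}_t(u)=\sigma(F_iu+G_i[x_t;1])$ and, for $k\ge 2$, $s^{(k)}_t(u)=\sigma\big(F_i s^{(k-1)}_t(u)+G_i[Hs^{(k-1)}_t(u);1]\big)$. For $1\le t\le T$ and $k\ge1$ put $e_{t,k}=Hs^{(k)}_t(u_t)-x_{t+k}\in\mathbb{R}^m$ and $$m(k)=\prod_{j=1}^{k}\operatorname{diag}\!\big(\sigma'(s^{(j-1)}_t(u_t))\big)F_i\in\mathbb{R}^{n\times n}$$ (ordered product). For $1\le a,b,c\le n$ and $1\le d\le m+1$ and $K\in\{1,2,\dots\}\cup\{\infty\}$ set $$D^{F,K}_{ab}(i)=\sum_{t=1}^T\sum_{k=1}^{K}\gamma^k\, e_{t,k}^\top H\,[m(k)]_a\,[u_t]_b,\qquad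 D^{G,K}_{cd}(i)=\sum_{t=1}^T\sum_{k=1}^{K}\gamma^k\, e_{t,k}^\top H\,[m(k)]_c\,\big[[x_{t+k};1]\big]_d .$$ Then the series $D^{F,\infty}_{ab}(i)$ and $D^{G,\infty}_{cd}(i)$ converge, and for every $\epsilon_0>0$ there exists $K$ such that for all $i$ and all indices $a,b,c,d$, $$|D^{F,\infty}_{ab}(i)-D^{F,K}_{ab}(i)|<\epsilon_0\quad\text{and}\quad |D^{G,\infty}_{cd}(i)-D^{G,K}_{cd}(i)|<\epsilon_0 .$$
   Context: This concerns a recurrent network $u_{t+1}=\sigma(Fu_t+G[x_t;1])$ with outputs $Hu_t$; $[x;1]\in\mathbb{R}^{m+1}$ denotes $x$ with a constant $1$ appended (bias component). $D^{F,\infty}$, $D^{G,\infty}$ are the paper's expressions for the gradient of the discounted multi-step prediction cost $\sum_{t}\sum_{k\ge1}\gamma^k\|e_{t,k}\|^2$ with respect to $F$ and $G$, evaluated at $(F_i,G_i)$, and $D^{F,K}$, $D^{G,K}$ are the corresponding truncations at lookahead $K$. $[v]_b$ denotes the $b$-th component of a vector $v$, $[M]_a$ the $a$-th column of a matrix $M$, and $\operatorname{diag}(v)$ the diagonal matrix with diagonal $v$. For a matrix $A$, $\|A\|_\infty$ is the operator norm induced by the maximum norm on vectors (maximum absolute row sum). *)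

(* Defs.v *)
From mathcomp Require Import all_boot all_order all_algebra.
From mathcomp Require Import all_classical all_reals all_analysis.

Set Implicit Arguments.
Unset Strict Implicit.
Unset Printing Implicit Defensive.

Import Order.TTheory GRing.Theory Num.Theory.
Import numFieldNormedType.Exports.
Local Open Scope ring_scope.

Section RNN.
Context {R : realType}.

Definition mx_inf_norm (p q : nat) (A : 'M[R]_(p, q)) : R :=
  \big[Num.max/0]_(i < p) \sum_(j < q) `|A i j|.

Definition projH (m n : nat) : 'M[R]_(m, n) :=
  \matrix_(i < m, j < n) ((i : nat) == (j : nat))%:R.

Definition aug (m : nat) (v : 'cV[R]_m) : 'cV[R]_(m + 1) := col_mx v 1%:M.

Definition sigv (sigma : R -> R) (n : nat) (v : 'cV[R]_n) : 'cV[R]_n :=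
  map_mx sigma v.

Fixpoint spred (sigma : R -> R) (m n : nat) (F : 'M[R]_n) (G : 'M[R]_(n, m + 1))
    (xt : 'cV[R]_m) (k : nat) (u : 'cV[R]_n) : 'cV[R]_n :=
  match k with
  | 0 => u
  | k'.+1 =>
      let v := spred sigma F G xt k' u in
      sigv sigma (F *m v + G *m aug (if k' is 0 then xt else projH m n *m v))
  end.

Fixpoint traj (sigma : R -> R) (m n : nat) (F : 'M[R]_n) (G : 'M[R]_(n, m + 1))
    (x : nat -> 'cV[R]_m) (t : nat) : 'cV[R]_n :=
  match t with
  | 0 => 0
  | t'.+1 => sigv sigma (F *m traj sigma F G x t' + G *m aug (x t'))
  end.

Definition err (sigma : R -> R) (m n : nat) (F : 'M[R]_n) (G : 'M[R]_(n, m + 1))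
    (x : nat -> 'cV[R]_m) (t k : nat) : 'cV[R]_m :=
  projH m n *m spred sigma F G (x t) k (traj sigma F G x t) - x (t + k)%N.

Fixpoint mprod (sigma : R -> R) (m n : nat) (F : 'M[R]_n) (G : 'M[R]_(n, m + 1))
    (x : nat -> 'cV[R]_m) (t k : nat) : 'M[R]_n :=
  match k with
  | 0 => 1%:M
  | k'.+1 =>
      mprod sigma F G x t k' *m
      (diag_mx (map_mx (derive1 sigma) (spred sigma F G (x t) k' (traj sigma F G x t)))^T *m F)
  end.

Definition DF (sigma : R -> R) (m n T : nat) (gamma : R) (F : 'M[R]_n)
    (G : 'M[R]_(n, m + 1)) (x : nat -> 'cV[R]_m) (a b : 'I_n) (K : nat) : R :=
  \sum_(1 <= t < T.+1) \sum_(1 <= k < K.+1)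
     gamma ^+ k * ((err sigma F G x t k)^T *m projH m n *m col a (mprod sigma F G x t k)) 0 0
       * (traj sigma F G x t) b 0.

Definition DG (sigma : R -> R) (m n T : nat) (gamma : R) (F : 'M[R]_n)
    (G : 'M[R]_(n, m + 1)) (x : nat -> 'cV[R]_m) (c : 'I_n) (d : 'I_(m + 1)) (K : nat) : R :=
  \sum_(1 <= t < T.+1) \sum_(1 <= k < K.+1)
     gamma ^+ k * ((err sigma F G x t k)^T *m projH m n *m col c (mprod sigma F G x t k)) 0 0
       * (aug (x (t + k)%N)) d 0.

End RNN.

(* Main.v *)
Require Import Defs.
From mathcomp Require Import all_boot all_order all_algebra.
From mathcomp Require Import all_classical all_reals all_analysis.
From mathcomp Require Import ring lra.

Import Order.TTheory GRing.Theory Num.Theory.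
Import numFieldNormedType.Exports.
Local Open Scope ring_scope.

Section H.
Context {R : realType}.
Local Open Scope classical_set_scope.
Local Open Scope ring_scope.

Lemma rowsum_le_inf (n : nat) (F : 'M[R]_n) i :
  \sum_j `|F i j| <= mx_inf_norm F.
Proof. rewrite /mx_inf_norm. exact: (@le_bigmax _ _ _ 0 (fun i => \sum_j `|F i j|) i). Qed.

Lemma rowsum_mul p l r (A : 'M[R]_(p,l)) (B : 'M[R]_(l,r)) al be :
  0 <= be -> (forall i, \sum_j `|A i j| <= al) -> (forall i, \sum_j `|B i j| <= be) ->
  forall i, \sum_j `|(A *m B) i j| <= al * be.
Proof.
move=> be0 hA hB i.
apply: (@le_trans _ _ (\sum_j \sum_k `|A i k| * `|B k j|)).
  apply: ler_sum => j _; rewrite mxE.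
  apply: le_trans (ler_norm_sum _ _ _) _.
  by apply: ler_sum => k _; rewrite normrM.
rewrite exchange_big /=.
apply: (@le_trans _ _ (\sum_k `|A i k| * be)).
  by apply: ler_sum => k _; rewrite -mulr_sumr ler_wpM2l.
by rewrite -mulr_suml ler_wpM2r.
Qed.

Lemma geo_partial (q : R) K d :
  \sum_(K <= k < K + d) q ^+ k * (1 - q) = q ^+ K - q ^+ (K + d).
Proof.
elim: d => [|d IH]; first by rewrite addn0 big_geq // subrr.
rewrite addnS big_nat_recr /=; last by rewrite leq_addr.
rewrite IH exprS mulrBr mulr1; ring.
Qed.


Lemma tail_bound (w : nat -> R) (C q : R) : 0 <= q -> q < 1 -> 0 <= C ->
  (forall k, `|w k| <= C * q ^+ k) ->
  cvgn (series w) /\ forall K, `|limn (series w) - series w K| <= C * q ^+ K / (1 - q).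
Proof.
move=> q0 q1 C0 hw.
have q1' : 0 < 1 - q by rewrite subr_gt0.
have cw : cvgn (series w).
  apply: normed_cvg.
  apply: (@series_le_cvg _ (fun k => `|w k|) (geometric C q)).
  - by move=> k.
  - by move=> k; rewrite /geometric /= mulr_ge0 // exprn_ge0.
  - by move=> k; rewrite /geometric /=; exact: hw.
  - by apply: is_cvg_geometric_series; rewrite ger0_norm.
split => // K.
have hc : (fun N => `|series w N - series w K|) @ \oo --> `|limn (series w) - series w K|.
  apply: cvg_norm; apply: cvgB => //; exact: cvg_cst.
rewrite -(cvg_lim _ hc) //.
apply: limr_le; first by apply/cvg_ex; eexists; exact: hc.
near=> N.
have KN : (K <= N)%N by near: N; exists K.
rewrite sub_series_geq //.
apply: le_trans (ler_norm_sum _ _ _) _.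
apply: (@le_trans _ _ (\sum_(K <= k < N) C * q ^+ k)); first by apply: ler_sum => k _; exact: hw.
rewrite -mulr_sumr -mulrA ler_wpM2l // ler_pdivlMr //.
rewrite mulr_suml -(subnKC KN) geo_partial.
by rewrite lerBlDr lerDl exprn_ge0.
Unshelve. all: by end_near.
Qed.


Lemma nondecr_derive_ge0 (f : R -> R) x : derivable f x 1 -> {homo f : y z / y <= z} ->
  0 <= derive1 f x.
Proof.
move=> df incrf.
apply: limr_ge.
  under eq_fun; first (move=> h; rewrite -{2}(scaler1 h); over).
  exact: df.
near=> h.
have h0 : h != 0 by near: h; exact: nbhs_dnbhs_neq.
move: h0; rewrite neq_lt => /orP[h0|h0] /=.
- rewrite nmulr_rge0 ?invr_lt0// subr_le0; apply: incrf; rewrite gerDr ltW //.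
- rewrite pmulr_rge0 ?invr_gt0// subr_ge0; apply: incrf; rewrite lerDr ltW //.
Unshelve. end_near. Qed.


Lemma double_tail (T : nat) (g : nat -> nat -> R) (B q : R) (S : nat -> R) :
  0 <= q -> q < 1 -> 0 <= B ->
  (forall t k, (0 < t)%N -> (0 < k)%N -> `|g t k| <= B * q ^+ k) ->
  (forall K, S K = \sum_(1 <= t < T.+1) \sum_(1 <= k < K.+1) g t k) ->
  cvgn S /\ forall K, `|limn S - S K| <= T%:R * B * q ^+ K / (1 - q).
Proof.
move=> q0 q1 B0 hg hS.
pose v k := \sum_(1 <= t < T.+1) g t k.+1.
have -> : S = series v.
  apply/funext => K; rewrite hS exchange_big_nat /= big_add1 /= seriesEnat /=.
  by [].
apply: tail_bound => // [|k]; first by rewrite mulr_ge0.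
apply: le_trans (ler_norm_sum _ _ _) _.
apply: (@le_trans _ _ (\sum_(1 <= t < T.+1) B * q ^+ k)).
  apply: ler_sum_nat => t /andP[t1 _]; apply: (le_trans (hg t k.+1 t1 isT)).
  rewrite ler_wpM2l // exprS ler_piMl // ?exprn_ge0 // ltW //.
by rewrite sumr_const_nat subn1 /= -mulrA mulr_natl.
Qed.


Lemma sigv_bound (sigma : R -> R) (hs : forall z, -1 <= sigma z <= 1) n (v : 'cV[R]_n) i :
  `|sigv sigma v i 0| <= 1.
Proof. by rewrite /sigv mxE ler_norml. Qed.

Lemma projH_mul m n (mn : (m <= n)%N) (v : 'cV[R]_n) j :
  (projH m n *m v) j 0 = v (widen_ord mn j) 0.
Proof.
rewrite mxE (bigD1 (widen_ord mn j)) //= mxE eqxx mul1r big1 ?addr0 // => l hl.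
rewrite mxE; case: eqP => [hjl|]; last by rewrite mul0r.
by exfalso; move: hl; apply/negP; rewrite negbK; apply/eqP/val_inj.
Qed.

Lemma quad_bound m n (mn : (m <= n)%N) (e : 'cV[R]_m) (c : 'cV[R]_n) be :
  (forall j, `|e j 0| <= 2) -> (forall l, `|c l 0| <= be) ->
  `|(e^T *m projH m n *m c) 0 0| <= m%:R * (2 * be).
Proof.
move=> he hc.
rewrite -mulmxA mxE.
apply: le_trans (ler_norm_sum _ _ _) _.
apply: (@le_trans _ _ (\sum_(j < m) 2 * be)).
  apply: ler_sum => j _; rewrite normrM mxE projH_mul.
  apply: ler_pM => //; exact: le_trans (normr_ge0 _) (hc _).
by rewrite sumr_const card_ord -[X in X <= _]mulr_natl.
Qed.


Lemma mprod_rowsum (sigma : R -> R) m n (F : 'M[R]_n) (G : 'M[R]_(n, m + 1))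
  (x : nat -> 'cV[R]_m) t r :
  (forall z, 0 <= derive1 sigma z) -> (forall z, derive1 sigma z <= 1) ->
  0 <= r -> mx_inf_norm F <= r ->
  forall k i, \sum_j `|mprod sigma F G x t k i j| <= r ^+ k.
Proof.
move=> hd0 hd1 r0 hF; elim => [|k IH] i /=.
  rewrite (bigD1 i) //= mxE eqxx normr1 big1 ?addr0 // => j hj.
  by rewrite mxE eq_sym (negbTE hj) normr0.
rewrite exprSr; apply: rowsum_mul => // l.
apply: le_trans (le_trans (@rowsum_le_inf n F l) hF).
apply: ler_sum => j _; rewrite mul_diag_mx mxE normrM !mxE.
apply: ler_piMl => //; rewrite ger0_norm //.
Qed.


Lemma mxsubE p l (A B : 'M[R]_(p, l)) i j : (A - B) i j = A i j - B i j.
Proof. by rewrite !mxE. Qed.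

Lemma entry_le_rowsum n (M : 'M[R]_n) l a : `|M l a| <= \sum_j `|M l j|.
Proof. by rewrite (bigD1 a) //= lerDl sumr_ge0. Qed.

Lemma term_bound (sigma : R -> R) m n (mn : (m <= n)%N) (F : 'M[R]_n) (G : 'M[R]_(n, m + 1))
  (x : nat -> 'cV[R]_m) (gamma q : R) (a : 'I_n) (w : R) t k :
  (forall t (j : 'I_m), -1 <= x t j 0 <= 1) ->
  (forall z, -1 <= sigma z <= 1) ->
  (forall z, 0 <= derive1 sigma z) -> (forall z, derive1 sigma z <= 1) ->
  0 < q -> gamma = q ^+ 2 ->
  mx_inf_norm F <= 1 / q -> `|w| <= 1 -> (0 < k)%N ->
  `| gamma ^+ k * ((err sigma F G x t k)^T *m projH m n *m col a (mprod sigma F G x t k)) 0 0 * w|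
   <= m%:R * 2 * q ^+ k.
Proof.
move=> hx hs hd0 hd1 q0 gq hF hw k0.
have r0 : 0 <= 1 / q by rewrite divr_ge0 // ltW.
have hg0 : 0 <= gamma by rewrite gq sqr_ge0.
rewrite !normrM ger0_norm ?exprn_ge0 //.
apply: (@le_trans _ _ (gamma ^+ k * (m%:R * (2 * (1 / q) ^+ k)) * 1)).
  apply: ler_pM => //; first by rewrite mulr_ge0 ?exprn_ge0.
  apply: ler_wpM2l; first by rewrite exprn_ge0.
  apply: (quad_bound _ _ mn) => [j|l].
    rewrite /err mxsubE; apply: le_trans (ler_normB _ _) _.
    rewrite -(addr0 2) -[2]/(1 + 1 : R) addr0; apply: lerD.
      rewrite projH_mul; case: k k0 => // k _ /=; exact: sigv_bound.
    by rewrite ler_norml.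
  rewrite mxE; apply: le_trans (entry_le_rowsum _ _ _ _) _.
  by apply: mprod_rowsum.
have E : gamma ^+ k * (1 / q) ^+ k = q ^+ k.
  by rewrite -exprMn gq expr2 mul1r mulrK // unitfE gt_eqF.
by rewrite mulr1 mulrCA [gamma ^+ k * _]mulrCA E mulrA.
Qed.


Lemma aug_bound m (v : 'cV[R]_m) d : (forall j, `|v j 0| <= 1) -> `|aug v d 0| <= 1.
Proof.
move=> hv; rewrite /aug; case: (splitP d) => j hj.
  have -> : d = lshift 1 j by apply: val_inj.
  by rewrite col_mxEu.
have -> : d = rshift m j by apply: val_inj.
by rewrite col_mxEd mxE; case: (_ == _); rewrite ?normr1 ?normr0.
Qed.

Lemma traj_bound (sigma : R -> R) (hs : forall z, -1 <= sigma z <= 1) m n (F : 'M[R]_n)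
  (G : 'M[R]_(n, m + 1)) x t b : (0 < t)%N -> `|traj sigma F G x t b 0| <= 1.
Proof. by case: t => // t _ /=; exact: sigv_bound. Qed.

Lemma choose_K (C q eps : R) : 0 <= C -> 0 < q -> q < 1 -> 0 < eps ->
  exists K : nat, (0 < K)%N /\ C * q ^+ K / (1 - q) < eps.
Proof.
move=> C0 q0 q1 e0.
have q1' : 0 < 1 - q by rewrite subr_gt0.
have e'0 : 0 < eps * (1 - q) / (C + 1) by rewrite divr_gt0 ?mulr_gt0 // ltr_wpDl.
have := @cvg_expr R q; rewrite gtr0_norm // => /(_ q1).
move/cvgrPdist_lt => /(_ _ e'0) [N _ HN].
exists N.+1; split => //.
have := HN N.+1 (leqnSn N); rewrite sub0r normrN ger0_norm ?exprn_ge0 ?ltW // => hq.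
rewrite ltr_pdivrMr //.
apply: (@le_lt_trans _ _ ((C + 1) * q ^+ N.+1)).
  by apply: ler_wpM2r; [rewrite exprn_ge0 // ltW | rewrite lerDl ler01].
by rewrite -ltr_pdivlMl ?ltr_wpDl // mulrC.
Qed.

End H.

Theorem lemma1 (R : realType) (n m T : nat) (gamma : R)
  (x : nat -> 'cV[R]_m) (sigma : R -> R)
  (F : nat -> 'M[R]_n) (G : nat -> 'M[R]_(n, m + 1)) :
  (0 < m)%N -> (m < n)%N -> (0 < T)%N ->
  0 < gamma -> gamma < 1 ->
  (forall t (j : 'I_m), -1 <= x t j 0 <= 1) ->
  (forall z, -1 <= sigma z <= 1) ->
  {homo sigma : y z / y <= z} ->
  (forall z, derivable sigma z 1) ->
  (forall z, derive1 sigma z <= 1) ->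
  (forall i, mx_inf_norm (F i) <= 1 / Num.sqrt gamma) ->
  (forall i (a b : 'I_n), cvgn (DF sigma T gamma (F i) (G i) x a b)) /\
  (forall i (c : 'I_n) (d : 'I_(m + 1)), cvgn (DG sigma T gamma (F i) (G i) x c d)) /\
  (forall eps0 : R, 0 < eps0 ->
     exists K : nat, (0 < K)%N /\
       forall i (a b c : 'I_n) (d : 'I_(m + 1)),
         `|limn (DF sigma T gamma (F i) (G i) x a b) - DF sigma T gamma (F i) (G i) x a b K| < eps0 /\
         `|limn (DG sigma T gamma (F i) (G i) x c d) - DG sigma T gamma (F i) (G i) x c d K| < eps0).
Proof.
move=> m0 mn0 T0 g0 g1 hx hs hmono hder hd1 hF.
have mn : (m <= n)%N := ltnW mn0.
have q0 : 0 < Num.sqrt gamma by rewrite sqrtr_gt0.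
have q1 : Num.sqrt gamma < 1 by rewrite -sqrtr1 ltr_sqrt.
have gq : gamma = Num.sqrt gamma ^+ 2 by rewrite sqr_sqrtr // ltW.
have hd0 z : 0 <= derive1 sigma z := @nondecr_derive_ge0 R sigma z (hder z) hmono.
have B0 : 0 <= (m%:R * 2 : R) by rewrite mulr_ge0.
have HF : forall i a b, cvgn (DF sigma T gamma (F i) (G i) x a b) /\
   forall K, `|limn (DF sigma T gamma (F i) (G i) x a b) - DF sigma T gamma (F i) (G i) x a b K|
     <= T%:R * (m%:R * 2) * Num.sqrt gamma ^+ K / (1 - Num.sqrt gamma).
  move=> i a b.
  apply: (@double_tail R T (fun t k => gamma ^+ k * ((err sigma (F i) (G i) x t k)^T *m projH m n
      *m col a (mprod sigma (F i) (G i) x t k)) 0 0 * (traj sigma (F i) (G i) x t) b 0)) => //.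
  - move=> t k t0 k0; apply: term_bound => //; exact: traj_bound.
have HG : forall i c d, cvgn (DG sigma T gamma (F i) (G i) x c d) /\
   forall K, `|limn (DG sigma T gamma (F i) (G i) x c d) - DG sigma T gamma (F i) (G i) x c d K|
     <= T%:R * (m%:R * 2) * Num.sqrt gamma ^+ K / (1 - Num.sqrt gamma).
  move=> i c d.
  apply: (@double_tail R T (fun t k => gamma ^+ k * ((err sigma (F i) (G i) x t k)^T *m projH m n
      *m col c (mprod sigma (F i) (G i) x t k)) 0 0 * (aug (x (t + k)%N)) d 0)) => //.
  - move=> t k t0 k0; apply: term_bound => //; apply: aug_bound => j.
    by rewrite ler_norml.
split; first by move=> i a b; case: (HF i a b).
split; first by move=> i c d; case: (HG i c d).
move=> eps e0.
have [K [K0 HK]] := @choose_K R (T%:R * (m%:R * 2)) _ eps (mulr_ge0 (ler0n _ _) B0) q0 q1 e0.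
exists K; split => // i a b c d; split.
  by apply: le_lt_trans HK; case: (HF i a b).
by apply: le_lt_trans HK; case: (HG i c d).
Qed.
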